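(* Let $\rho_0,\rho_1,\rho_2$ and the complex surface $E$ with holomorphic map $f\colon E\to\mathbb{CP}^1$ be as in the context, and let $s$ be a number with $\rho_0^{-1}<s<\rho_1^{-1}\rho_2$. Put $V'=\Delta(1,s)\times\Delta(\rho_1^{-1},\rho_0^{-1})$, $U'=\{(z_1,z_2)\in V' : |z_2|<|z_1|\}$, $V''=V\cup V'\subset\mathbb{C}^2$ (where $V=\Delta(1,\rho_2)\times\Delta(\rho_0^{-1})$), and let $Y=V''/\!\sim$ be the quotient obtained by identifying each point $(z_1,z_2)\in U'$ with $\psi(z_1,z_2)\in V'$, where $\psi\colon U'\to V'$ is the holomorphic embedding $\psi(z_1,z_2)=(z_1z_2^{-1},z_2)$. Then $Y$ is biholomorphic to the preimage $f^{-1}(\Delta(\rho_0^{-1}))$, where $\Delta(\rho_0^{-1})\subset\mathbb{CP}^1$ is the disk of the first chart described in the context.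
   Context: Notation: $\Delta(a,b)=\{z\in\mathbb{C}: a<|z|<b\}$, $\Delta(a)=\{z\in\mathbb{C}:|z|<a\}$. Fix positive numbers with $1<\rho_2<\rho_1^{-1}$ and $\rho_1\rho_2^{-1}<\rho_0<\rho_1$. Let $V=\Delta(1,\rho_2)\times\Delta(\rho_0^{-1})\subset\mathbb{C}^2$ with coordinates $(z_1,z_2)$. Let $W$ be the total space of Kodaira's genus-1 holomorphic Lefschetz fibration $h\colon W\to\Delta(\rho_1)$ with exactly one singular fiber $\Sigma=h^{-1}(0)$ (a rational curve with one node), defined as follows: $W-\Sigma=(\mathbb{C}^*\times\Delta(0,\rho_1))/\mathbb{Z}$, where $n\cdot(w_1,w_2)=(w_1w_2^n,w_2)$, $h$ is induced by $(w_1,w_2)\mapsto w_2$, and $W$ is the canonical extension of this elliptic fibration over $0$ with a nodal fiber. Let $\phi(w)=\exp\big(\frac{1}{4\pi i}(\log w)^2-\frac12\log w\big)$ (multivalued on $\Delta(0,\rho_1)$; any two branches differ by a factor $w^k$, $k\in\mathbb{Z}$), and let $\Phi\colon U\to W$, $U=\Delta(1,\rho_2)\times\Delta(\rho_1^{-1},\rho_0^{-1})\subset V$, be the single-valued map $\Phi(z_1,z_2)=[(z_1\phi(z_2^{-1}),z_2^{-1})]$, which is a biholomorphism onto its image. Define $E=V\cup_\Phi W$ by identifying $U$ with $\Phi(U)$ via $\Phi$, and let $f\colon E\to\mathbb{CP}^1$ be $(z_1,z_2)\mapsto z_2$ on $V$ and $h$ on $W$, where $\mathbb{CP}^1$ is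 obtained by gluing the disks $\Delta(\rho_0^{-1})$ and $\Delta(\rho_1)$ via the inversion $z\mapsto z^{-1}$ identifying $\Delta(\rho_1^{-1},\rho_0^{-1})\subset\Delta(\rho_0^{-1})$ with $\Delta(\rho_0,\rho_1)\subset\Delta(\rho_1)$. *)

(* Defs.v *)
From Stdlib Require Import Reals Relations.
From Coquelicot Require Import Coquelicot.
Open Scope R_scope.
Open Scope C_scope.

Definition C2 : Type := (C * C)%type.
Definition C2_NM : NormedModule C_AbsRing :=
  prod_NormedModule C_AbsRing C_NormedModule C_NormedModule.

Definition cexp (z : C) : C :=
  (exp (Re z) * cos (Im z), exp (Re z) * sin (Im z))%R.

Definition annulus (a b : R) (z : C) : Prop := (a < Cmod z < b)%R.
Definition disk (a : R) (z : C) : Prop := (Cmod z < a)%R.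

(* holomorphic map C^2 -> C^2 on an open set O: complex-Frechet differentiable
   (derivative C-linear) at every point of O *)
Definition holo_on (O : C2 -> Prop) (g : C2 -> C2) : Prop :=
  forall x : C2, O x ->
    exists l : C2 -> C2,
      @filterdiff C_AbsRing C2_NM C2_NM g (@locally C2_NM x) l.

Definition ball2 (x : C2) (e : R) (y : C2) : Prop :=
  (Cmod (fst y - fst x) < e /\ Cmod (snd y - snd x) < e)%R.

(* A space obtained by gluing open pieces of C^2 (indexed by nat tags):
   a domain of "points in charts" and a gluing relation; points of the space
   are the classes of the equivalence relation generated by the gluing
   relation on the domain. *)
Record gluing := Gluing {
  gdom : nat * C2 -> Prop ;
  grel : nat * C2 -> nat * C2 -> Prop }.

Definition geqv (G : gluing) : nat * C2 -> nat * C2 -> Prop :=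
  clos_refl_sym_trans _ (fun p q => gdom G p /\ gdom G q /\ grel G p q).

(* F (a map on chart points, representing a map of the quotients) is
   holomorphic: near every chart point it agrees, up to the identification,
   with a holomorphic map into a single chart. *)
Definition glued_holo (G1 G2 : gluing) (F : nat * C2 -> nat * C2) : Prop :=
  forall p, gdom G1 p ->
    exists (e : R) (j : nat) (g : C2 -> C2),
      (0 < e)%R /\ holo_on (ball2 (snd p) e) g /\
      forall y, ball2 (snd p) e y -> gdom G1 (fst p, y) ->
        gdom G2 (j, g y) /\ geqv G2 (F (fst p, y)) (j, g y).

Definition biholomorphic (G1 G2 : gluing) : Prop :=
  exists (F H : nat * C2 -> nat * C2),
    (forall p, gdom G1 p -> gdom G2 (F p)) /\
    (forall q, gdom G2 q -> gdom G1 (H q)) /\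
    (forall p p', gdom G1 p -> gdom G1 p' -> geqv G1 p p' -> geqv G2 (F p) (F p')) /\
    (forall q q', gdom G2 q -> gdom G2 q' -> geqv G2 q q' -> geqv G1 (H q) (H q')) /\
    (forall p, gdom G1 p -> geqv G1 (H (F p)) p) /\
    (forall q, gdom G2 q -> geqv G2 (F (H q)) q) /\
    glued_holo G1 G2 F /\ glued_holo G2 G1 H.

Definition V (r0 r2 : R) (z : C2) : Prop :=
  annulus 1 r2 (fst z) /\ disk (/ r0) (snd z).
Definition V' (r0 r1 s : R) (z : C2) : Prop :=
  annulus 1 s (fst z) /\ annulus (/ r1) (/ r0) (snd z).
Definition U' (r0 r1 s : R) (z : C2) : Prop :=
  V' r0 r1 s z /\ (Cmod (snd z) < Cmod (fst z))%R.
Definition psi (z : C2) : C2 := (fst z / snd z, snd z).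

Definition Y_gluing (r0 r1 r2 s : R) : gluing := {|
  gdom := fun p => fst p = 0%nat /\ (V r0 r2 (snd p) \/ V' r0 r1 s (snd p)) ;
  grel := fun p q => fst p = 0%nat /\ fst q = 0%nat /\
            U' r0 r1 s (snd p) /\ V' r0 r1 s (snd q) /\ snd q = psi (snd p) |}.

(* ---- The space f^{-1}(Delta(r0^{-1})) in E ----
   Since 0 (the image of the singular fibre) corresponds to z2 = infinity,
   which is not in Delta(r0^{-1}), f^{-1}(Delta(r0^{-1})) is V glued via Phi
   to h^{-1}(Delta(r0,r1)) = (C^* x Delta(r0,r1))/Z.
   Tag 0: the chart V; tag 1: the covering chart C^* x Delta(r0,r1) of
   h^{-1}(Delta(r0,r1)), with (w1,w2) ~ (w1 w2^n, w2). *)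
Definition Wchart (r0 r1 : R) (w : C2) : Prop :=
  fst w <> 0 /\ annulus r0 r1 (snd w).
Definition Uset (r0 r1 r2 : R) (z : C2) : Prop :=
  annulus 1 r2 (fst z) /\ annulus (/ r1) (/ r0) (snd z).

(* branch-free description of Phi: (z1,z2) is glued to
   (z1 * exp((log w)^2/(4 pi i) - (log w)/2), w) with w = z2^{-1}, for some
   (hence, up to the Z-action, any) logarithm L of w *)
Definition Phi_rel (z w : C2) : Prop :=
  snd w = / snd z /\
  exists L : C, cexp L = snd w /\
    fst w = fst z * cexp (L * L / (4 * PI * Ci) - L / 2).

Definition E0_gluing (r0 r1 r2 : R) : gluing := {|
  gdom := fun p => (fst p = 0%nat /\ V r0 r2 (snd p)) \/
                   (fst p = 1%nat /\ Wchart r0 r1 (snd p)) ;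
  grel := fun p q =>
    (fst p = 1%nat /\ fst q = 1%nat /\ snd (snd q) = snd (snd p) /\
       fst (snd q) = fst (snd p) * snd (snd p)) \/
    (fst p = 0%nat /\ fst q = 1%nat /\ Uset r0 r1 r2 (snd p) /\
       Phi_rel (snd p) (snd q)) |}.

(* Main.v *)
Require Import Defs.
From Stdlib Require Import Reals Lra Lia ZArith Relations.
From Stdlib Require Import Classical ClassicalEpsilon.
From Coquelicot Require Import Coquelicot.
Open Scope R_scope.

Definition tpi (k : Z) : C := (0, 2 * PI * IZR k)%R.

Lemma tpi_eq k : tpi k = (2 * PI * Ci * IZR k)%C.
Proof. unfold tpi; apply injective_projections; simpl; ring. Qed.

Lemma cexp_add a b : cexp (a + b)%C = (cexp a * cexp b)%C.
Proof.
  destruct a as [x y], b as [u v]; unfold cexp; simpl.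
  rewrite exp_plus, cos_plus, sin_plus.
  apply injective_projections; simpl; ring.
Qed.

Lemma Cmod_cexp z : Cmod (cexp z) = exp (Re z).
Proof.
  destruct z as [x y]; unfold cexp, Cmod.
  match goal with |- sqrt ?a = _ => replace a with (exp x * exp x) end.
  - apply sqrt_square. left; apply exp_pos.
  - simpl. pose proof (sin2_cos2 y). unfold Rsqr in H. 
    transitivity (exp x * exp x * (sin y * sin y + cos y * cos y)); [rewrite H; ring| ring].
Qed.

Lemma cexp_nz z : cexp z <> 0%C.
Proof.
  intro H. assert (Cmod (cexp z) = 0) by (rewrite H; apply Cmod_0).
  rewrite Cmod_cexp in H0. pose proof (exp_pos (Re z)); lra.
Qed.

Lemma cexp_0 : cexp 0%C = 1%C.
Proof. unfold cexp; simpl; rewrite exp_0, cos_0, sin_0. unfold RtoC. f_equal; ring. Qed.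

Lemma cexp_opp z : cexp (- z)%C = (/ cexp z)%C.
Proof.
  assert (H : (cexp (-z) * cexp z)%C = 1%C).
  { rewrite <- cexp_add. rewrite Cplus_comm, Cplus_opp_r. apply cexp_0. }
  pose proof (cexp_nz z).
  replace (cexp (-z)) with (cexp (-z) * cexp z * / cexp z)%C by (field; auto).
  rewrite H. ring.
Qed.

Lemma cexp_minus a b : cexp (a - b)%C = (cexp a / cexp b)%C.
Proof. unfold Cminus, Cdiv. rewrite cexp_add, cexp_opp. reflexivity. Qed.

Lemma sin_IZR_PI (m : Z) : sin (IZR m * PI) = 0.
Proof. apply sin_eq_0_1. exists m; reflexivity. Qed.

Lemma cexp_tpi m : cexp (tpi m) = 1%C.
Proof.
  unfold cexp, tpi; simpl. rewrite exp_0.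
  replace (2 * PI * IZR m)%R with (2 * (IZR m * PI))%R by ring.
  rewrite cos_2a_sin, sin_2a, sin_IZR_PI.
  apply injective_projections; simpl; ring.
Qed.

Lemma cexp_inj a b : cexp a = cexp b -> exists k : Z, b = (a + tpi k)%C.
Proof.
  intro H.
  set (c := (b - a)%C).
  assert (Hc : cexp c = 1%C).
  { unfold c; rewrite cexp_minus, H. field. apply cexp_nz. }
  assert (Hre : Re c = 0).
  { assert (Cmod (cexp c) = 1) by (rewrite Hc; apply Cmod_1).
    rewrite Cmod_cexp in H0. rewrite <- (ln_exp (Re c)), H0. apply ln_1. }
  destruct c as [x y] eqn:Ec. simpl in Hre. subst x.
  unfold cexp in Hc; simpl in Hc. rewrite exp_0 in Hc.
  injection Hc as H1 H2. rewrite Rmult_1_l in H1, H2.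
  replace y with (2 * (y / 2))%R in H1 by field.
  rewrite cos_2a_sin in H1.
  assert (sin (y/2) = 0) by nra.
  destruct (sin_eq_0_0 _ H0) as [k Hk].
  exists k.
  assert (b = a + c)%C by (unfold c; ring).
  rewrite H3, Ec. unfold tpi. apply injective_projections; simpl; lra.
Qed.

Definition Qf (L : C) : C := (L * L / (4 * PI * Ci) - L / 2)%C.

Lemma PI_neq0' : RtoC PI <> 0%C.
Proof. intro H. injection H as H. apply PI_neq0; auto. Qed.

Lemma four_PI_Ci_nz : (4 * PI * Ci)%C <> 0%C.
Proof.
  apply Cmult_neq_0; [apply Cmult_neq_0|apply Ci_nz].
  intro H; injection H as H; lra. apply PI_neq0'.
Qed.

Lemma Z_half (k : Z) : exists m : Z, (k * (k - 1) = 2 * m)%Z.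
Proof.
  destruct (Zeven_odd_dec k) as [He|Ho].
  - destruct (Zeven_ex _ He) as [j Hj]. exists (j * (2*j - 1))%Z. subst; ring.
  - destruct (Zodd_ex _ Ho) as [j Hj]. exists (j * (2*j + 1))%Z. subst; ring.
Qed.

Lemma Qshift L k : cexp (Qf (L + tpi k)) = (cexp (Qf L) * cexp (IZR k * L))%C.
Proof.
  destruct (Z_half k) as [m Hm].
  assert (E : Qf (L + tpi k) = (Qf L + IZR k * L + tpi m)%C).
  { unfold Qf. rewrite !tpi_eq.
    assert (Hm' : (IZR k * (IZR k - 1) = 2 * IZR m)%R).
    { rewrite <- minus_IZR, <- mult_IZR, Hm, mult_IZR. reflexivity. }
    assert (Hm'' : (RtoC (IZR m)) = (IZR k * (IZR k - 1) / 2)%C).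
    { assert (IZR m = IZR k * (IZR k - 1) / 2)%R as -> by lra.
      rewrite RtoC_div by lra. rewrite RtoC_mult, RtoC_minus. reflexivity. }
    rewrite Hm''.
    field. split; [apply Ci_nz | apply PI_neq0']. }
  rewrite E, !cexp_add, cexp_tpi. ring.
Qed.

Lemma Cmod_sqr_split (w : C) : (Cmod w * Cmod w = Re w * Re w + Im w * Im w)%R.
Proof. pose proof (Cmod2_alt w). simpl in H. nra. Qed.

Definition Lg (w : C) : C :=
  (ln (Cmod w),
   if Rle_dec 0 (Im w) then acos (Re w / Cmod w) else - acos (Re w / Cmod w))%R.

Lemma Lg_spec (w : C) : w <> 0%C -> cexp (Lg w) = w.
Proof.
  intro Hw. pose proof (proj1 (Cmod_gt_0 w) Hw) as Hm.
  pose proof (Cmod_sqr_split w) as Hs.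
  assert (Hr : (-1 <= Re w / Cmod w <= 1)%R).
  { pose proof (re_le_Cmod w). apply Rabs_le_between in H.
    split; [apply (Rmult_le_reg_r (Cmod w)); auto; field_simplify; lra
           |apply (Rmult_le_reg_r (Cmod w)); auto; field_simplify; lra]. }
  assert (Hsq : sqrt (1 - (Re w / Cmod w)²) = Rabs (Im w) / Cmod w).
  { replace (1 - (Re w / Cmod w)²)%R with ((Im w / Cmod w)²).
    - rewrite sqrt_Rsqr_abs. unfold Rdiv. rewrite Rabs_mult, Rabs_inv.
      rewrite (Rabs_pos_eq (Cmod w)); lra.
    - unfold Rsqr.
      replace (1 - Re w / Cmod w * (Re w / Cmod w))%R with ((Cmod w * Cmod w - Re w * Re w)/(Cmod w * Cmod w))%R by (field; lra).
      replace (Im w / Cmod w * (Im w / Cmod w))%R with ((Im w * Im w)/(Cmod w * Cmod w))%R by (field; lra).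
      rewrite Hs. f_equal; ring. }
  unfold cexp, Lg. destruct w as [a b]. simpl in *.
  rewrite exp_ln by auto.
  destruct (Rle_dec 0 b).
  - rewrite cos_acos, sin_acos by auto. rewrite Hsq. rewrite Rabs_pos_eq by auto.
    f_equal; field; lra.
  - rewrite cos_neg, sin_neg, cos_acos, sin_acos by auto. rewrite Hsq.
    rewrite Rabs_left by lra. f_equal; field; lra.
Qed.

Definition Phi_map (z : C2) : C2 := ((fst z * cexp (Qf (Lg (/ snd z))))%C, (/ snd z)%C).

Definition Fmap (r0 r2 : R) (p : nat * C2) : nat * C2 :=
  if excluded_middle_informative (V r0 r2 (snd p)) then (0%nat, snd p)
  else (1%nat, Phi_map (snd p)).

Definition Hyp (r0 r1 r2 s : R) : Prop :=
  0 < r0 /\ 0 < r1 /\ 0 < r2 /\ 1 < r2 /\ r2 < / r1 /\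
  r1 / r2 < r0 /\ r0 < r1 /\ / r0 < s /\ s < r2 / r1.

Lemma Hyp_facts r0 r1 r2 s : Hyp r0 r1 r2 s ->
  r1 < 1 /\ 1 < / r1 /\ / r1 < / r0 /\ r2 < s /\ s * r1 < r2 /\ r2 * r1 < 1 /\ 1 < s.
Proof.
  intros (H0 & H1 & H2 & H3 & H4 & H5 & H6 & H7 & H8).
  assert (r2 * r1 < 1).
  { apply (Rmult_lt_compat_r r1) in H4; auto. rewrite Rinv_l in H4; lra. }
  assert (r1 < 1) by nra.
  assert (1 < / r1).
  { apply (Rmult_lt_reg_r r1); auto. rewrite Rinv_l; lra. }
  assert (/ r1 < / r0) by (apply Rinv_lt_contravar; nra).
  assert (s * r1 < r2).
  { apply (Rmult_lt_compat_r r1) in H8; auto. unfold Rdiv in H8.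
    rewrite Rmult_assoc, Rinv_l, Rmult_1_r in H8; lra. }
  repeat split; try lra.
Qed.

Lemma annulus_inv a b (w : C) : 0 < a -> annulus a b w -> annulus (/ b) (/ a) (/ w)%C.
Proof.
  intros Ha [H1 H2]. assert (w <> 0%C) by (apply Cmod_gt_0; lra).
  unfold annulus. rewrite Cmod_inv by auto. split; apply Rinv_lt_contravar; nra.
Qed.

Lemma Cinv_nz (w : C) : w <> 0%C -> (/ w)%C <> 0%C.
Proof. intros H H'. pose proof (Cinv_l w H). rewrite H', Cmult_0_l in H0. apply C1_nz; auto. Qed.

Lemma Cinv_inv' (w : C) : w <> 0%C -> (/ / w)%C = w.
Proof.
  intro H. pose proof (Cinv_nz w H).
  transitivity (/ / w * (/ w * w))%C. rewrite Cinv_l by auto. ring.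
  rewrite Cmult_assoc, Cinv_l by auto. ring.
Qed.

Lemma geqv_step (G : gluing) p q : gdom G p -> gdom G q -> grel G p q -> geqv G p q.
Proof. intros. unfold geqv. apply rst_step. auto. Qed.
Lemma geqv_refl (G : gluing) p : geqv G p p.
Proof. apply rst_refl. Qed.
Lemma geqv_sym (G : gluing) p q : geqv G p q -> geqv G q p.
Proof. apply rst_sym. Qed.
Lemma geqv_trans (G : gluing) p q r : geqv G p q -> geqv G q r -> geqv G p r.
Proof. apply rst_trans. Qed.

Lemma annulus_nz a b (w : C) : 0 <= a -> annulus a b w -> w <> 0%C.
Proof. intros Ha [H1 H2]. apply Cmod_gt_0. lra. Qed.

Lemma Zstep (r0 r1 r2 : R) (w1 w2 : C) : 0 < r0 -> w1 <> 0%C -> annulus r0 r1 w2 ->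
  geqv (E0_gluing r0 r1 r2) (1%nat, (w1, w2)) (1%nat, ((w1 * w2)%C, w2)).
Proof.
  intros H0 Hw1 Ha. assert (w2 <> 0%C) by (apply (annulus_nz r0 r1); auto; lra).
  apply geqv_step; simpl.
  - right. split; auto. split; auto.
  - right. split; auto. split; simpl; auto. apply Cmult_neq_0; auto.
  - left. repeat split; auto.
Qed.

Lemma Zchain_nat (r0 r1 r2 : R) (w1 w2 L : C) (n : nat) : 0 < r0 -> w1 <> 0%C ->
  annulus r0 r1 w2 -> cexp L = w2 ->
  geqv (E0_gluing r0 r1 r2) (1%nat, (w1, w2)) (1%nat, ((w1 * cexp (INR n * L))%C, w2)).
Proof.
  intros H0 Hw1 Ha HL. induction n.
  - simpl INR. replace (RtoC 0 * L)%C with (RtoC 0) by ring. rewrite cexp_0, Cmult_1_r.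
    apply geqv_refl.
  - eapply geqv_trans; [apply IHn|].
    replace (w1 * cexp (INR (S n) * L))%C with ((w1 * cexp (INR n * L)) * w2)%C.
    + apply Zstep; auto. apply Cmult_neq_0; auto. apply cexp_nz.
    + rewrite S_INR, RtoC_plus, <- HL, <- Cmult_assoc, <- cexp_add. f_equal. f_equal. ring.
Qed.

Lemma Zchain (r0 r1 r2 : R) (w1 w2 L : C) (k : Z) : 0 < r0 -> w1 <> 0%C ->
  annulus r0 r1 w2 -> cexp L = w2 ->
  geqv (E0_gluing r0 r1 r2) (1%nat, (w1, w2)) (1%nat, ((w1 * cexp (IZR k * L))%C, w2)).
Proof.
  intros H0 Hw1 Ha HL.
  destruct (Z_le_gt_dec 0 k) as [Hk|Hk].
  - rewrite <- (Z2Nat.id k Hk), <- INR_IZR_INZ. apply Zchain_nat; auto.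
  - set (n := Z.to_nat (- k)).
    assert (Ek : IZR k = - INR n).
    { unfold n. rewrite INR_IZR_INZ, Z2Nat.id by lia. rewrite opp_IZR. ring_simplify. reflexivity. }
    rewrite Ek.
    assert (Hnz : (w1 * cexp (RtoC (- INR n) * L))%C <> 0%C) by (apply Cmult_neq_0; auto; apply cexp_nz).
    pose proof (Zchain_nat r0 r1 r2 (w1 * cexp (RtoC (- INR n) * L))%C w2 L n H0 Hnz Ha HL) as Hc.
    rewrite <- Cmult_assoc, <- cexp_add in Hc.
    replace (RtoC (- INR n) * L + INR n * L)%C with (RtoC 0) in Hc by (rewrite RtoC_opp; ring).
    rewrite cexp_0, Cmult_1_r in Hc. apply geqv_sym; exact Hc.
Qed.

Lemma Phi_two (r0 r1 r2 : R) (z w w' : C2) : 0 < r0 ->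
  Phi_rel z w -> Phi_rel z w' -> Wchart r0 r1 w ->
  geqv (E0_gluing r0 r1 r2) (1%nat, w) (1%nat, w').
Proof.
  intros H0 [Hw2 [L [HL Hw1]]] [Hw2' [L' [HL' Hw1']]] [Hnz Ha].
  destruct w as [w1 w2], w' as [w1' w2']. simpl in *.
  assert (cexp L = cexp L') by congruence.
  destruct (cexp_inj _ _ H) as [k Hk]. subst L'.
  change (fst z * cexp (Qf (L + tpi k)))%C with (fst z * cexp (Qf (L + tpi k)))%C in Hw1'.
  assert (E : w1' = (w1 * cexp (IZR k * L))%C).
  { rewrite Hw1', Hw1. fold (Qf (L + tpi k)). fold (Qf L). rewrite Qshift. ring. }
  assert (w2' = w2) by congruence. subst w1' w2'.
  rewrite E, H1. apply Zchain; auto.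
Qed.

Lemma Phi_map_spec (r0 r1 r2 s : R) (z : C2) : Hyp r0 r1 r2 s -> V' r0 r1 s z ->
  Phi_rel z (Phi_map z) /\ Wchart r0 r1 (Phi_map z).
Proof.
  intros Hh [Hz1 Hz2]. pose proof (Hyp_facts _ _ _ _ Hh) as F.
  destruct Hh as (H0 & H1 & _).
  assert (Hnz2 : snd z <> 0%C) by (apply (annulus_nz (/r1) (/r0)); auto; left; apply Rinv_0_lt_compat; auto).
  assert (Hnz1 : fst z <> 0%C) by (apply (annulus_nz 1 s); auto; lra).
  split.
  - split; auto. exists (Lg (/ snd z)). split; auto.
    apply Lg_spec. apply Cinv_nz; auto.
  - split.
    + simpl. apply Cmult_neq_0; auto. apply cexp_nz.
    + simpl. pose proof (annulus_inv _ _ _ (Rinv_0_lt_compat _ H1) Hz2).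
      rewrite !Rinv_inv in H; auto.
Qed.

Lemma K_lemma (r0 r1 r2 s : R) (z w : C2) : Hyp r0 r1 r2 s -> V' r0 r1 s z ->
  Wchart r0 r1 w -> Phi_rel z w ->
  geqv (E0_gluing r0 r1 r2) (Fmap r0 r2 (0%nat, z)) (1%nat, w).
Proof.
  intros Hh Hz Hw HP. pose proof Hh as Hh'. destruct Hh' as (H0 & _).
  unfold Fmap; simpl. destruct (excluded_middle_informative (V r0 r2 z)) as [Hv|Hv].
  - apply geqv_step; simpl.
    + left; auto.
    + right; auto.
    + right. split; [auto|split; [auto|split; [split; [apply Hv|apply Hz]|exact HP]]].
  - destruct (Phi_map_spec _ _ _ _ _ Hh Hz) as [HP' HW'].
    eapply Phi_two; eauto.
Qed.

Lemma Y_psi_step (r0 r1 r2 s : R) (z z' : C2) : Hyp r0 r1 r2 s ->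
  V' r0 r1 s z -> V' r0 r1 s z' -> snd z = snd z' ->
  fst z = (fst z' * / snd z')%C ->
  geqv (Y_gluing r0 r1 r2 s) (0%nat, z') (0%nat, z).
Proof.
  intros Hh Hz Hz' E2 E1. pose proof Hh as (H0 & H1 & _).
  assert (Hnz : snd z' <> 0%C).
  { apply (annulus_nz (/r1) (/r0)); [left; apply Rinv_0_lt_compat; auto | apply Hz']. }
  assert (HU : Cmod (snd z') < Cmod (fst z')).
  { destruct Hz as [[Ha _] _]. rewrite E1, Cmod_mult, Cmod_inv in Ha by auto.
    pose proof (proj1 (Cmod_gt_0 _) Hnz).
    apply (Rmult_lt_compat_r (Cmod (snd z'))) in Ha; auto.
    rewrite Rmult_assoc, Rinv_l, Rmult_1_r, Rmult_1_l in Ha; lra. }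
  apply geqv_step; simpl.
  - split; auto.
  - split; auto.
  - repeat split; auto; try apply Hz'; try apply Hz.
    destruct z as [a b], z' as [a' b']; simpl in *. unfold psi; simpl. subst. reflexivity.
Qed.

Lemma Y_rel_k (r0 r1 r2 s : R) (z z' : C2) (L : C) (k : Z) : Hyp r0 r1 r2 s ->
  V' r0 r1 s z -> V' r0 r1 s z' -> snd z = snd z' -> cexp L = (/ snd z)%C ->
  fst z = (fst z' * cexp (IZR k * L))%C ->
  geqv (Y_gluing r0 r1 r2 s) (0%nat, z) (0%nat, z').
Proof.
  intros Hh Hz Hz' E2 HL E1. pose proof (Hyp_facts _ _ _ _ Hh) as F.
  pose proof Hh as (H0 & H1 & H2 & H3 & H4 & H5 & H6 & H7 & H8).
  assert (Hnz : snd z <> 0%C).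
  { apply (annulus_nz (/r1) (/r0)); [left; apply Rinv_0_lt_compat; auto | apply Hz]. }
  set (rho := exp (Re L)).
  assert (Hrho : r0 < rho < r1).
  { unfold rho. rewrite <- Cmod_cexp, HL.
    pose proof (annulus_inv _ _ _ (Rinv_0_lt_compat _ H1) (proj2 Hz)).
    rewrite !Rinv_inv in H; auto. }
  assert (HreL : Re L < 0).
  { apply exp_lt_inv. rewrite exp_0. fold rho. lra. }
  assert (Hm : Cmod (fst z) = Cmod (fst z') * exp (IZR k * Re L)).
  { rewrite E1, Cmod_mult, Cmod_cexp, re_scal_l. reflexivity. }
  pose proof Hz as [[Hz1a Hz1b] _]. pose proof Hz' as [[Hz1a' Hz1b'] _].
  destruct (Z.eq_dec k 0) as [->|Hk0].
  { assert (z = z').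
    { destruct z, z'; simpl in *. rewrite E1, E2. f_equal.
      replace (RtoC (IZR 0) * L)%C with (RtoC 0) by (simpl; ring). rewrite cexp_0. ring. }
    subst; apply geqv_refl. }
  destruct (Z.eq_dec k 1) as [->|Hk1].
  { apply geqv_sym. apply Y_psi_step; auto.
    rewrite E1. rewrite <- E2, <- HL. f_equal. f_equal. simpl. apply Cmult_1_l. }
  destruct (Z.eq_dec k (-1)) as [->|Hkm1].
  { apply Y_psi_step; auto. rewrite <- HL.
    rewrite E1, <- Cmult_assoc, <- cexp_add.
    replace (RtoC (IZR (-1)) * L + L)%C with (RtoC 0) by (change (IZR (-1)) with (- (1))%R; rewrite RtoC_opp; ring).
    rewrite cexp_0; ring. }
  exfalso.
  assert (Hrho2 : exp (2 * Re L) = rho * rho) by (unfold rho; rewrite <- exp_plus; f_equal; ring).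
  assert (Hpos : 0 < rho) by (unfold rho; apply exp_pos).
  destruct (Z_le_gt_dec 2 k) as [Hk|Hk].
  - apply IZR_le in Hk.
    assert (exp (IZR k * Re L) <= rho * rho).
    { rewrite <- Hrho2. destruct (Req_dec (IZR k * Re L) (2 * Re L)) as [E|E].
      rewrite E; lra. left; apply exp_increasing. nra. }
    assert (Cmod (fst z) <= Cmod (fst z') * (rho * rho)).
    { rewrite Hm. apply Rmult_le_compat_l; auto. apply Cmod_ge_0. }
    assert (Cmod (fst z') * (rho * rho) < s * (r1 * r1)).
    { assert (rho*rho < r1*r1) by nra. assert (0 < rho*rho) by nra. nra. }
    nra.
  - assert (Hk' : (k <= -2)%Z) by lia. apply IZR_le in Hk'.
    assert (1 <= exp (IZR k * Re L) * (rho * rho)).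
    { rewrite <- Hrho2, <- exp_plus, <- exp_0. destruct (Req_dec (IZR k * Re L + 2 * Re L) 0) as [E|E].
      rewrite E; lra. left; apply exp_increasing. nra. }
    assert (Cmod (fst z') <= Cmod (fst z) * (rho * rho)).
    { rewrite Hm. pose proof (Cmod_ge_0 (fst z')). nra. }
    assert (Cmod (fst z) * (rho * rho) < s * (r1 * r1)).
    { assert (rho*rho < r1*r1) by nra. assert (0 < rho*rho) by nra. nra. }
    nra.
Qed.

Lemma Y_two (r0 r1 r2 s : R) (z z' w : C2) : Hyp r0 r1 r2 s ->
  V' r0 r1 s z -> V' r0 r1 s z' -> Phi_rel z w -> Phi_rel z' w ->
  geqv (Y_gluing r0 r1 r2 s) (0%nat, z) (0%nat, z').
Proof.
  intros Hh Hz Hz' [Hw2 [L [HL Hw1]]] [Hw2' [L' [HL' Hw1']]].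
  pose proof Hh as (H0 & H1 & _).
  assert (Hnz : snd z <> 0%C).
  { apply (annulus_nz (/r1) (/r0)); [left; apply Rinv_0_lt_compat; auto | apply Hz]. }
  assert (Hnz' : snd z' <> 0%C).
  { apply (annulus_nz (/r1) (/r0)); [left; apply Rinv_0_lt_compat; auto | apply Hz']. }
  assert (E2 : snd z = snd z').
  { rewrite <- (Cinv_inv' (snd z)), <- (Cinv_inv' (snd z')) by auto. congruence. }
  assert (cexp L = cexp L') by congruence.
  destruct (cexp_inj _ _ H) as [k Hk]. subst L'.
  fold (Qf L) in Hw1. fold (Qf (L + tpi k)) in Hw1'. rewrite Qshift in Hw1'.
  apply (Y_rel_k r0 r1 r2 s z z' L k); auto.
  - congruence.
  - assert (Hc : cexp (Qf L) <> 0%C) by apply cexp_nz.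
    assert (Heq : (fst z * cexp (Qf L) = fst z' * cexp (IZR k * L) * cexp (Qf L))%C).
    { rewrite <- Hw1, Hw1'. ring. }
    apply (f_equal (fun x => x * / cexp (Qf L))%C) in Heq.
    replace (fst z * cexp (Qf L) * / cexp (Qf L))%C with (fst z) in Heq by (field; auto).
    rewrite Heq. field. auto.
Qed.

Definition Acorr (r0 r1 s : R) (q p0 : nat * C2) : Prop :=
  (fst q = 0%nat /\ p0 = q) \/
  (fst q = 1%nat /\ exists z, p0 = (0%nat, z) /\ V' r0 r1 s z /\ Phi_rel z (snd q)).

Definition Scl (r0 r1 r2 s : R) (q p : nat * C2) : Prop :=
  exists p0, Acorr r0 r1 s q p0 /\ geqv (Y_gluing r0 r1 r2 s) p p0.

Lemma A_unique (r0 r1 r2 s : R) q p0 p1 : Hyp r0 r1 r2 s ->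
  Acorr r0 r1 s q p0 -> Acorr r0 r1 s q p1 -> geqv (Y_gluing r0 r1 r2 s) p0 p1.
Proof.
  intros Hh [[Hq E0]|[Hq [z [E0 [Hz HP]]]]] [[Hq' E1]|[Hq' [z' [E1 [Hz' HP']]]]];
    try congruence.
  - subst. apply geqv_refl.
  - subst. eapply Y_two; eauto.
Qed.

Lemma Uset_V' (r0 r1 r2 s : R) (z : C2) : Hyp r0 r1 r2 s -> Uset r0 r1 r2 z -> V' r0 r1 s z.
Proof.
  intros Hh [[H1 H2] H3]. pose proof (Hyp_facts _ _ _ _ Hh). split; auto. split; lra.
Qed.

Lemma Phi_rel_shift1 (z : C2) (w1 w2 : C) : Phi_rel z (w1, w2) -> Phi_rel z ((w1 * w2)%C, w2).
Proof.
  intros [H2 [L [HL H1]]]. simpl in *. split; auto.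
  exists (L + tpi 1)%C. split.
  - rewrite cexp_add, cexp_tpi, HL. simpl. apply Cmult_1_r.
  - fold (Qf (L + tpi 1)). rewrite Qshift. fold (Qf L) in H1. rewrite H1, <- HL.
    replace (RtoC (IZR 1) * L)%C with L by (simpl; symmetry; apply Cmult_1_l). cbn [fst snd]. ring.
Qed.

Lemma Phi_rel_shiftm1 (z : C2) (w1 w2 : C) : w2 <> 0%C ->
  Phi_rel z ((w1 * w2)%C, w2) -> Phi_rel z (w1, w2).
Proof.
  intros Hnz [H2 [L [HL H1]]]. simpl in *. split; auto.
  exists (L + tpi (-1))%C. split.
  - rewrite cexp_add, cexp_tpi, HL. simpl. apply Cmult_1_r.
  - fold (Qf (L + tpi (-1))). rewrite Qshift. fold (Qf L) in H1.
    replace w1 with (w1 * w2 * / w2)%C by (field; auto). rewrite H1, <- HL.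
    rewrite <- cexp_opp.
    replace (RtoC (IZR (-1)) * L)%C with (- L)%C by (change (IZR (-1)) with (- (1))%R; rewrite RtoC_opp; ring).
    cbn [fst snd]. ring.
Qed.

Lemma S_step (r0 r1 r2 s : R) q q' : Hyp r0 r1 r2 s ->
  gdom (E0_gluing r0 r1 r2) q -> gdom (E0_gluing r0 r1 r2) q' ->
  grel (E0_gluing r0 r1 r2) q q' ->
  forall p, Scl r0 r1 r2 s q p <-> Scl r0 r1 r2 s q' p.
Proof.
  intros Hh Dq Dq' Rqq' p. pose proof Hh as (H0 & _).
  destruct q as [t w], q' as [t' w']. simpl in *.
  destruct Rqq' as [(Et & Et' & E2 & E1)|(Et & Et' & HU & HP)].
  - subst t t'. destruct w as [w1 w2], w' as [w1' w2']. simpl in *. subst w2' w1'.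
    assert (Hnz : w2 <> 0%C).
    { destruct Dq as [[? _]|[_ [_ Ha]]]; [discriminate|]. apply (annulus_nz r0 r1); auto; lra. }
    split.
    + intros [p0 [[[? _]|[_ [z [E0 [Hz HP]]]]] Hp]]; [discriminate|].
      exists p0. split; auto. right. split; auto. exists z. split; [auto|split; [auto|]].
      apply Phi_rel_shift1; auto.
    + intros [p0 [[[? _]|[_ [z [E0 [Hz HP]]]]] Hp]]; [discriminate|].
      exists p0. split; auto. right. split; auto. exists z. split; [auto|split; [auto|]].
      simpl in HP. apply Phi_rel_shiftm1; auto.
  - subst t t'. split.
    + intros [p0 [[[_ E0]|[? _]] Hp]]; [|discriminate].
      exists p0. split; auto. right. split; auto. exists w. subst p0. split; [auto|split; [|auto]].
      apply (Uset_V' r0 r1 r2 s); auto.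
    + intros [p0 [[[? _]|[_ [z [E0 [Hz HP']]]]] Hp]]; [discriminate|].
      exists (0%nat, w). split. left; auto.
      eapply geqv_trans; [apply Hp|]. subst p0.
      apply (Y_two r0 r1 r2 s z w w'); auto. apply (Uset_V' r0 r1 r2 s); auto.
Qed.

Lemma S_inv (r0 r1 r2 s : R) q q' : Hyp r0 r1 r2 s ->
  geqv (E0_gluing r0 r1 r2) q q' ->
  forall p, Scl r0 r1 r2 s q p <-> Scl r0 r1 r2 s q' p.
Proof.
  intros Hh H. induction H as [x y [Dx [Dy Rxy]]| x | x y _ IH | x y z _ IH1 _ IH2]; intro p.
  - apply S_step; auto.
  - tauto.
  - rewrite IH; tauto.
  - rewrite IH1, IH2; tauto.
Qed.

Lemma F_dom (r0 r1 r2 s : R) p : Hyp r0 r1 r2 s -> gdom (Y_gluing r0 r1 r2 s) p ->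
  gdom (E0_gluing r0 r1 r2) (Fmap r0 r2 p).
Proof.
  intros Hh [Ep Hp]. unfold Fmap. destruct (excluded_middle_informative (V r0 r2 (snd p))).
  - left; simpl; auto.
  - right; simpl. split; auto. destruct Hp as [Hp|Hp]; [contradiction|].
    apply (Phi_map_spec r0 r1 r2 s); auto.
Qed.

Lemma F_A (r0 r1 r2 s : R) p : Hyp r0 r1 r2 s -> gdom (Y_gluing r0 r1 r2 s) p ->
  Acorr r0 r1 s (Fmap r0 r2 p) p.
Proof.
  intros Hh [Ep Hp]. unfold Fmap. destruct (excluded_middle_informative (V r0 r2 (snd p))).
  - left; simpl. split; auto. destruct p; simpl in *; subst; auto.
  - right; simpl. split; auto. destruct Hp as [Hp|Hp]; [contradiction|].
    exists (snd p). split. destruct p; simpl in *; subst; auto.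
    split; auto. apply (Phi_map_spec r0 r1 r2 s); auto.
Qed.

Lemma F_inj (r0 r1 r2 s : R) p p' : Hyp r0 r1 r2 s ->
  gdom (Y_gluing r0 r1 r2 s) p -> gdom (Y_gluing r0 r1 r2 s) p' ->
  geqv (E0_gluing r0 r1 r2) (Fmap r0 r2 p) (Fmap r0 r2 p') ->
  geqv (Y_gluing r0 r1 r2 s) p p'.
Proof.
  intros Hh Dp Dp' He.
  assert (Hs : Scl r0 r1 r2 s (Fmap r0 r2 p) p).
  { exists p. split. apply F_A; auto. apply geqv_refl. }
  apply (S_inv r0 r1 r2 s _ _ Hh He) in Hs.
  destruct Hs as [p0 [HA Hp]].
  eapply geqv_trans; [apply Hp|].
  apply (A_unique r0 r1 r2 s (Fmap r0 r2 p')); auto. apply F_A; auto.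
Qed.

Lemma F_resp (r0 r1 r2 s : R) p p' : Hyp r0 r1 r2 s ->
  geqv (Y_gluing r0 r1 r2 s) p p' ->
  geqv (E0_gluing r0 r1 r2) (Fmap r0 r2 p) (Fmap r0 r2 p').
Proof.
  intros Hh H. pose proof Hh as (H0 & H1 & _).
  induction H as [x y [Dx [Dy Rxy]]| x | x y _ IH | x y z _ IH1 _ IH2].
  - destruct x as [tx z], y as [ty z']. simpl in Rxy.
    destruct Rxy as (Ex & Ey & HU & HV & Ez'). simpl in *. subst tx ty.
    destruct HU as [HV0 _].
    destruct (Phi_map_spec r0 r1 r2 s z Hh HV0) as [HP HW].
    eapply geqv_trans; [apply (K_lemma r0 r1 r2 s z (Phi_map z)); auto|].
    destruct (Phi_map z) as [w1 w2] eqn:Ew.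
    assert (Hw2 : annulus r0 r1 w2) by apply HW.
    assert (Hw1 : w1 <> 0%C) by apply HW.
    eapply geqv_trans; [apply Zstep; auto|].
    apply geqv_sym. apply (K_lemma r0 r1 r2 s); auto.
    + split; simpl; auto. apply Cmult_neq_0; auto. apply (annulus_nz r0 r1); auto; lra.
    + destruct HP as [HP2 [L [HL HP1]]]. simpl in *.
      split; simpl. rewrite Ez'; simpl; auto.
      exists L. split; auto. rewrite Ez'. simpl. rewrite HP1, HP2. unfold Cdiv. ring.
  - apply geqv_refl.
  - apply geqv_sym; auto.
  - eapply geqv_trans; eauto.
Qed.

Lemma EXK (m a s : R) : 1 < s -> 0 < m -> 0 < a -> a < ln s ->
  exists k : Z, 1 < m * exp (IZR k * a) < s.
Proof.
  intros H1s Hm Ha Has.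
  destruct (archimed (- ln m / a)) as [Hu1 Hu2].
  exists (up (- ln m / a)).
  set (k := IZR (up (- ln m / a))) in *.
  assert (Hk1 : - ln m < k * a).
  { apply (Rmult_lt_compat_r a) in Hu1; auto. unfold Rdiv in Hu1.
    rewrite Rmult_assoc, Rinv_l, Rmult_1_r in Hu1; lra. }
  assert (Hk2 : k * a <= - ln m + a).
  { assert (k <= - ln m / a + 1) by lra.
    apply (Rmult_le_compat_r a) in H; [|lra]. unfold Rdiv in H.
    rewrite Rmult_plus_distr_r, Rmult_assoc, Rinv_l, Rmult_1_r, Rmult_1_l in H; lra. }
  assert (Hs : 0 < s) by lra.
  rewrite <- (exp_ln m) by auto. rewrite <- exp_plus.
  split.
  - rewrite <- exp_0. apply exp_increasing. lra.
  - rewrite <- (exp_ln s) by auto. apply exp_increasing. lra.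
Qed.

Lemma exists_k (r0 r1 r2 s : R) (w : C2) (L : C) : Hyp r0 r1 r2 s ->
  Wchart r0 r1 w -> cexp L = snd w ->
  exists k : Z, annulus 1 s (fst w * cexp (- Qf L - IZR k * L))%C.
Proof.
  intros Hh [Hw1 Hw2] HL. pose proof (Hyp_facts _ _ _ _ Hh) as (F1 & F2 & F3 & F4 & F5 & F6 & F7).
  pose proof Hh as (H0 & H1 & H2 & H3 & H4 & H5 & H6 & H7 & H8).
  assert (HreL : exp (Re L) = Cmod (snd w)) by (rewrite <- Cmod_cexp, HL; auto).
  destruct Hw2 as [Ha1 Ha2].
  assert (Hneg : Re L < 0).
  { apply exp_lt_inv. rewrite exp_0. lra. }
  assert (Hlns : - Re L < ln s).
  { assert (exp (- Re L) < s).
    { rewrite exp_Ropp, HreL. apply Rlt_trans with (/ r0).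
      apply Rinv_lt_contravar; nra. lra. }
    rewrite <- (ln_exp (- Re L)). apply ln_increasing; auto. apply exp_pos. }
  assert (Hm : 0 < Cmod (fst w) * exp (- Re (Qf L))).
  { apply Rmult_lt_0_compat. apply Cmod_gt_0; auto. apply exp_pos. }
  destruct (EXK _ (- Re L) s ltac:(lra) Hm ltac:(lra) Hlns) as [k Hk].
  exists k. unfold annulus. rewrite Cmod_mult, Cmod_cexp.
  replace (Re (- Qf L - IZR k * L)%C) with (- Re (Qf L) + IZR k * (- Re L))%R.
  - rewrite exp_plus, <- Rmult_assoc. auto.
  - unfold Cminus. rewrite re_plus, !re_opp, re_scal_l. ring.
Qed.

Lemma Phi_rel_k (w1 w2 L : C) (k : Z) : w2 <> 0%C -> cexp L = w2 ->
  Phi_rel ((w1 * cexp (- Qf L - IZR k * L))%C, (/ w2)%C) (w1, w2).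
Proof.
  intros Hnz HL. split; simpl.
  - symmetry; apply Cinv_inv'; auto.
  - exists (L + tpi k)%C. split.
    + rewrite cexp_add, cexp_tpi, HL. ring.
    + fold (Qf (L + tpi k)). rewrite Qshift.
      rewrite <- cexp_add, <- Cmult_assoc, <- cexp_add.
      replace (- Qf L - IZR k * L + (Qf L + IZR k * L))%C with (RtoC 0) by ring.
      rewrite cexp_0. ring.
Qed.

Lemma F_surj (r0 r1 r2 s : R) q : Hyp r0 r1 r2 s -> gdom (E0_gluing r0 r1 r2) q ->
  exists p, gdom (Y_gluing r0 r1 r2 s) p /\ geqv (E0_gluing r0 r1 r2) (Fmap r0 r2 p) q.
Proof.
  intros Hh [[Eq Hq]|[Eq Hq]]; pose proof Hh as (H0 & H1 & _).
  - exists q. split. split; auto. unfold Fmap.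
    destruct (excluded_middle_informative (V r0 r2 (snd q))); [|contradiction].
    destruct q; simpl in *; subst. apply geqv_refl.
  - destruct q as [t [w1 w2]]. simpl in *. subst t.
    assert (Hnz : w2 <> 0%C) by (apply (annulus_nz r0 r1); [lra|apply Hq]).
    destruct (exists_k r0 r1 r2 s (w1, w2) (Lg w2) Hh Hq (Lg_spec w2 Hnz)) as [k Hk].
    simpl in Hk.
    set (z := ((w1 * cexp (- Qf (Lg w2) - IZR k * Lg w2))%C, (/ w2)%C)).
    assert (Hz : V' r0 r1 s z).
    { split; auto. simpl. pose proof (annulus_inv _ _ _ H0 (proj2 Hq)). auto. }
    exists (0%nat, z). split. split; auto.
    apply (K_lemma r0 r1 r2 s); auto. apply Phi_rel_k; auto. apply Lg_spec; auto.
Qed.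

Definition Hmap (r0 r1 r2 s : R) (q : nat * C2) : nat * C2 :=
  epsilon (inhabits q) (fun p => gdom (Y_gluing r0 r1 r2 s) p /\
                                geqv (E0_gluing r0 r1 r2) (Fmap r0 r2 p) q).

Lemma H_spec (r0 r1 r2 s : R) q : Hyp r0 r1 r2 s -> gdom (E0_gluing r0 r1 r2) q ->
  gdom (Y_gluing r0 r1 r2 s) (Hmap r0 r1 r2 s q) /\
  geqv (E0_gluing r0 r1 r2) (Fmap r0 r2 (Hmap r0 r1 r2 s q)) q.
Proof.
  intros Hh Dq. unfold Hmap. apply epsilon_spec. apply F_surj; auto.
Qed.
Lemma Cmod_diff (a b : C) : Rabs (Cmod a - Cmod b) <= Cmod (a - b).
Proof.
  apply Rabs_le. split.
  - pose proof (Cmod_triangle (b - a) a). replace (b - a + a)%C with b in H by ring.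
    rewrite <- (Cmod_opp (b - a)) in H. replace (- (b - a))%C with (a - b)%C in H by ring. lra.
  - pose proof (Cmod_triangle (a - b) b). replace (a - b + b)%C with a in H by ring. lra.
Qed.


Lemma sin_bnd_pos (y : R) : 0 <= y -> y <= 1/2 -> y - y^3/6 <= sin y <= y.
Proof.
  intros H H0. pose proof PI2_3_2. pose proof (sin_bound y 0 H ltac:(lra)) as H2.
  unfold sin_approx in H2.
  change (2*0+1)%nat with 1%nat in H2. change (2*(0+1))%nat with 2%nat in H2. cbn [sum_f_R0] in H2. unfold sin_term in H2.
  replace (INR (Factorial.fact (2*0+1))) with 1 in H2 by (simpl; ring).
  replace (INR (Factorial.fact (2*1+1))) with 6 in H2 by (simpl; ring).
  replace (INR (Factorial.fact (2*2+1))) with 120 in H2 by (simpl; ring).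
  simpl in H2. destruct H2 as [H2 H3].
  replace (y^3) with (y*(y*(y*1))) by ring.
  assert (0 <= y*(y*(y*1))) by (apply Rmult_le_pos; [lra|]; apply Rmult_le_pos; lra).
  assert (0 <= y*(y*(y*(y*(y*1)))) <= y*(y*(y*1))).
  { split. repeat (apply Rmult_le_pos; try lra). 
    replace (y*(y*(y*(y*(y*1))))) with (y*(y*(y*1))*(y*y)) by ring.
    assert (y*y <= 1) by nra.
    apply Rle_trans with (y*(y*(y*1))*1); [apply Rmult_le_compat_l; lra| lra]. }
  split; lra.
Qed.

Lemma cos_bnd (y : R) : -1/2 <= y -> y <= 1/2 -> 1 - y^2/2 <= cos y <= 1.
Proof.
  intros H H0. pose proof PI2_3_2. pose proof (cos_bound y 0 ltac:(lra) ltac:(lra)) as H2.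
  unfold cos_approx in H2.
  change (2*0+1)%nat with 1%nat in H2. change (2*(0+1))%nat with 2%nat in H2. cbn [sum_f_R0] in H2. unfold cos_term in H2.
  replace (INR (Factorial.fact (2*0))) with 1 in H2 by (simpl; ring).
  replace (INR (Factorial.fact (2*1))) with 2 in H2 by (simpl; ring).
  simpl in H2. destruct H2 as [H2 H3].
  split; [replace (y^2) with (y*(y*1)) by ring; lra|]. apply COS_bound.
Qed.

Lemma sin_bnd (y : R) : Rabs y <= 1/2 -> Rabs (sin y) <= Rabs y /\ Rabs (sin y - y) <= Rabs y ^ 3 / 6.
Proof.
  intro Hy. destruct (Rle_dec 0 y) as [Hp|Hn].
  - rewrite (Rabs_pos_eq y) in * by auto. destruct (sin_bnd_pos y Hp Hy) as [A B].
    assert (0 <= y^3) by (apply pow_le; lra).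
    assert (y^3 <= y) by (replace (y^3) with (y*(y*y)) by ring; assert (y*y <= 1) by nra; nra).
    split; apply Rabs_le; split; lra.
  - rewrite (Rabs_left y) in * by lra.
    destruct (sin_bnd_pos (-y) ltac:(lra) Hy) as [A B]. rewrite sin_neg in A, B.
    assert (0 <= (-y)^3) by (apply pow_le; lra).
    assert ((-y)^3 <= -y) by (replace ((-y)^3) with ((-y)*((-y)*(-y))) by ring; assert ((-y)*(-y) <= 1) by nra; nra).
    split; apply Rabs_le; split; lra.
Qed.

Lemma exp_bnd (x : R) : Rabs x <= 1/2 ->
  0 <= exp x - 1 - x <= 2 * x^2 /\ exp x <= 2 /\ Rabs (exp x - 1) <= 2 * Rabs x.
Proof.
  intro Hx. apply Rabs_le_between in Hx.
  pose proof (exp_ineq1_le x) as L1. pose proof (exp_ineq1_le (-x)) as L2.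
  assert (E : exp x * exp (-x) = 1) by (rewrite <- exp_plus; replace (x + -x) with 0 by ring; apply exp_0).
  pose proof (exp_pos x). pose proof (exp_pos (-x)).
  assert (P : exp x * (1 - x) <= 1) by nra.
  assert (U : (exp x - 1 - x) * (1 - x) <= x^2) by nra.
  assert (U2 : exp x - 1 - x <= 2 * x^2).
  { destruct (Rle_dec (exp x - 1 - x) (2 * x^2)); auto. exfalso.
    assert (2 * x^2 * (1 - x) >= x^2) by nra. nra. }
  split; [split; lra|]. split. nra.
  apply Rabs_le. assert (x^2 <= Rabs x / 2).
  { destruct (Rle_dec 0 x). rewrite Rabs_pos_eq by auto. nra. rewrite Rabs_left by lra. nra. }
  pose proof (Rabs_pos x). pose proof (Rle_abs x). pose proof (Rle_abs (-x)) as Hn. rewrite Rabs_Ropp in Hn.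
  split; lra.
Qed.

Lemma Cmod_le_sum (z : C) : Cmod z <= Rabs (Re z) + Rabs (Im z).
Proof.
  unfold Cmod. destruct z as [a b]; simpl.
  rewrite <- (sqrt_Rsqr (Rabs a + Rabs b)) by (pose proof (Rabs_pos a); pose proof (Rabs_pos b); lra).
  apply sqrt_le_1_alt. unfold Rsqr.
  pose proof (Rabs_pos a). pose proof (Rabs_pos b).
  assert (Rabs a * Rabs a = a * a) by (rewrite <- Rabs_mult; apply Rabs_pos_eq; nra).
  assert (Rabs b * Rabs b = b * b) by (rewrite <- Rabs_mult; apply Rabs_pos_eq; nra).
  nra.
Qed.

Lemma re_im_le (z : C) : Rabs (Re z) <= Cmod z /\ Rabs (Im z) <= Cmod z /\
  Cmod z * Cmod z = Re z * Re z + Im z * Im z.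
Proof.
  pose proof (Cmod_sqr_split z). pose proof (Cmod_ge_0 z). split; [|split]; auto.
  - apply re_le_Cmod.
  - rewrite <- (Rabs_pos_eq (Cmod z)) by auto. apply Rsqr_le_abs_0. unfold Rsqr.
    assert (0 <= Re z * Re z) by nra. lra.
Qed.

Lemma cexp_taylor (h : C) : Cmod h <= 1/2 -> Cmod (cexp h - 1 - h) <= 4 * (Cmod h * Cmod h).
Proof.
  intro Hh. destruct (re_im_le h) as (Hx & Hy & Hs).
  destruct h as [x y]. simpl in *.
  set (A := exp x * cos y - 1 - x). set (B := exp x * sin y - y).
  assert (E : (cexp (x, y) - 1 - (x, y))%C = (A, B)).
  { unfold cexp, A, B. simpl. unfold Cminus, Cplus, Copp, RtoC. simpl. f_equal; ring. }
  rewrite E. eapply Rle_trans; [apply Cmod_le_sum|]. simpl.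
  destruct (exp_bnd x ltac:(lra)) as [[E1 E2] [E3 E4]].
  assert (Hy' : - (1/2) <= y <= 1/2) by (apply (proj1 (Rabs_le_between y (1/2))); lra).
  destruct (cos_bnd y ltac:(lra) ltac:(lra)) as [C1 C2].
  destruct (sin_bnd y ltac:(lra)) as [S1 S2].
  pose proof (exp_pos x).
  assert (HA : Rabs A <= 2 * x^2 + y^2).
  { unfold A. apply Rabs_le. split; nra. }
  assert (HB : Rabs B <= 2 * Rabs x * Rabs y + Rabs y ^ 3 / 6).
  { unfold B. replace (exp x * sin y - y) with ((exp x - 1) * sin y + (sin y - y)) by ring.
    eapply Rle_trans; [apply Rabs_triang|]. rewrite Rabs_mult.
    apply Rplus_le_compat; auto.
    pose proof (Rabs_pos (sin y)). pose proof (Rabs_pos (exp x - 1)). pose proof (Rabs_pos x).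
    pose proof (Rabs_pos y). nra. }
  assert (Rabs x * Rabs x = x * x) by (rewrite <- Rabs_mult; apply Rabs_pos_eq; nra).
  assert (Hyy : Rabs y * Rabs y = y * y) by (rewrite <- Rabs_mult; apply Rabs_pos_eq; nra).
  pose proof (Rabs_pos x). pose proof (Rabs_pos y).
  assert (Rabs y ^ 3 / 6 <= y * y).
  { replace (Rabs y ^ 3) with (Rabs y * (Rabs y * Rabs y)) by ring. rewrite Hyy.
    assert (Rabs y <= 1/2) by lra. assert (0 <= y*y) by nra. nra. }
  assert (2 * Rabs x * Rabs y <= x * x + y * y).
  { pose proof (Rle_0_sqr (Rabs x - Rabs y)) as Hq. unfold Rsqr in Hq. lra. }
  simpl in HA. nra.
Qed.

Lemma is_derive_sq (f : C -> C) (x l : C) (K d : R) : 0 < d -> 0 <= K ->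
  (forall h : C, Cmod h < d -> Cmod ((f (x + h) - f x - h * l)%C) <= K * (Cmod h * Cmod h)) ->
  is_derive f x l.
Proof.
  intros Hd HK Hb. split. apply is_linear_scal_l.
  intros x' Hx'. apply (@is_filter_lim_locally_unique C_AbsRing (AbsRing_NormedModule C_AbsRing)) in Hx'. subst x'.
  intros eps. apply (@locally_le_locally_norm C_AbsRing (AbsRing_NormedModule C_AbsRing) x).
  assert (Hdl : 0 < Rmin d (eps / (K + 1))).
  { apply Rmin_glb_lt; auto. apply Rdiv_lt_0_compat; [apply cond_pos|lra]. }
  exists (mkposreal _ Hdl). intros y Hy. unfold ball_norm in Hy. simpl in Hy.
  change (minus y x) with (y - x)%C in *.
  change (minus (minus (f y) (f x)) (scal (y - x)%C l)) with (f y - f x - (y - x) * l)%C.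
  change (norm ?a) with (Cmod a) in *.
  pose proof (Rmin_l d (eps / (K + 1))). pose proof (Rmin_r d (eps / (K + 1))).
  set (h := (y - x)%C) in *.
  replace y with (x + h)%C by (unfold h; ring).
  specialize (Hb h ltac:(lra)).
  pose proof (Cmod_ge_0 h). pose proof (cond_pos eps).
  assert (K * Cmod h <= eps).
  { assert (Cmod h <= eps / (K + 1)) by lra.
    apply Rle_trans with ((K + 1) * (eps / (K+1))). nra. right; field; lra. }
  nra.
Qed.

Lemma is_derive_cexp (z : C) : is_derive cexp z (cexp z).
Proof.
  apply (is_derive_sq cexp z (cexp z) (4 * exp (Re z)) (1/2)); [lra| pose proof (exp_pos (Re z)); lra |].
  intros h Hh.
  replace (cexp (z + h) - cexp z - h * cexp z)%C with (cexp z * (cexp h - 1 - h))%C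
    by (rewrite cexp_add; ring).
  rewrite Cmod_mult, Cmod_cexp. pose proof (cexp_taylor h ltac:(lra)). pose proof (exp_pos (Re z)).
  nra.
Qed.

Definition exd (f : C -> C) (x : C) : Prop :=
  @ex_filterdiff C_AbsRing C_NormedModule C_NormedModule f (locally x).

Lemma lin_mul (l : C) : @is_linear C_AbsRing C_NormedModule C_NormedModule (fun y => (y * l)%C).
Proof.
  split.
  - intros a b. change ((a + b) * l = a * l + b * l)%C. ring.
  - intros k a. change ((k * a) * l = k * (a * l))%C. ring.
  - exists (Cmod l + 1). split. pose proof (Cmod_ge_0 l); lra.
    intros a. change (Cmod (a * l) <= (Cmod l + 1) * Cmod a).
    rewrite Cmod_mult. pose proof (Cmod_ge_0 a). pose proof (Cmod_ge_0 l). nra.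
Qed.

Lemma exd_sq (f : C -> C) (x l : C) (K d : R) : 0 < d -> 0 <= K ->
  (forall h : C, Cmod h < d -> Cmod ((f (x + h) - f x - h * l)%C) <= K * (Cmod h * Cmod h)) ->
  exd f x.
Proof.
  intros Hd HK Hb. exists (fun y => (y * l)%C). split. apply lin_mul.
  intros x' Hx'. apply (@is_filter_lim_locally_unique C_AbsRing C_NormedModule) in Hx'. subst x'.
  intros eps. apply (@locally_le_locally_norm C_AbsRing C_NormedModule x).
  assert (Hdl : 0 < Rmin d (eps / (K + 1))).
  { apply Rmin_glb_lt; auto. apply Rdiv_lt_0_compat; [apply cond_pos|lra]. }
  exists (mkposreal _ Hdl). intros y Hy. unfold ball_norm in Hy. simpl in Hy.
  change (minus y x) with (y - x)%C in *.
  change (norm ?a) with (Cmod a) in *.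
  change (minus (minus (f y) (f x)) ((y - x) * l)%C) with (f y - f x - (y - x) * l)%C.
  pose proof (Rmin_l d (eps / (K + 1))). pose proof (Rmin_r d (eps / (K + 1))).
  set (h := (y - x)%C) in *.
  replace y with (x + h)%C by (unfold h; ring).
  specialize (Hb h ltac:(lra)).
  pose proof (Cmod_ge_0 h). pose proof (cond_pos eps).
  assert (K * Cmod h <= eps).
  { assert (Cmod h <= eps / (K + 1)) by lra.
    apply Rle_trans with ((K + 1) * (eps / (K+1))). nra. right; field; lra. }
  nra.
Qed.

Lemma exd_cexp (z : C) : exd cexp z.
Proof.
  apply (exd_sq cexp z (cexp z) (4 * exp (Re z)) (1/2)); [lra| pose proof (exp_pos (Re z)); lra |].
  intros h Hh.
  replace (cexp (z + h) - cexp z - h * cexp z)%C with (cexp z * (cexp h - 1 - h))%C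
    by (rewrite cexp_add; ring).
  rewrite Cmod_mult, Cmod_cexp. pose proof (cexp_taylor h ltac:(lra)). pose proof (exp_pos (Re z)).
  nra.
Qed.

Lemma exd_quad (a b : C) (v : C) : exd (fun v => (a * (v * v) + b * v)%C) v.
Proof.
  apply (exd_sq _ v (2 * a * v + b)%C (Cmod a) 1); [lra|apply Cmod_ge_0|].
  intros h Hh.
  replace (a * ((v + h) * (v + h)) + b * (v + h) - (a * (v * v) + b * v) - h * (2 * a * v + b))%C
    with (a * (h * h))%C by ring.
  rewrite !Cmod_mult. lra.
Qed.

Lemma exd_ext (f g : C -> C) (x : C) : (forall y, f y = g y) -> exd f x -> exd g x.
Proof. intros E H. unfold exd. apply (@ex_filterdiff_ext C_AbsRing C_NormedModule C_NormedModule (locally x) _ f g E H). Qed.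

Ltac solve_nz := repeat split; first [apply Ci_nz | apply PI_neq0' | apply four_PI_Ci_nz |
  (let HH := fresh in intro HH; injection HH as HH; lra) ].

Lemma exd_Qneg (v : C) : exd (fun v => Qf (- v)) v.
Proof.
  apply (exd_ext (fun v => (/ (4 * PI * Ci) * (v * v) + / 2 * v)%C)).
  - intro y. unfold Qf. field. solve_nz.
  - apply exd_quad.
Qed.

Lemma exd_Qk (k : Z) (v : C) : exd (fun v => (- Qf v - IZR k * v)%C) v.
Proof.
  apply (exd_ext (fun v => (- / (4 * PI * Ci) * (v * v) + (/ 2 - IZR k) * v)%C)).
  - intro y. unfold Qf. field. solve_nz.
  - apply exd_quad.
Qed.

Definition rr : R := 1 / 10000.

Lemma Cmod_near1 (u : C) : Cmod (u - 1) < rr -> 1 - rr < Cmod u < 1 + rr.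
Proof.
  intro H. pose proof (Cmod_diff u 1). rewrite Cmod_1 in H0. apply Rabs_le_between in H0. lra.
Qed.

Lemma Lg_small (u : C) : Cmod (u - 1) < rr -> Cmod (Lg u) <= 1/16.
Proof.
  intro Hu. pose proof (Cmod_near1 u Hu) as Hm. unfold rr in *.
  eapply Rle_trans; [apply Cmod_le_sum|]. unfold Lg. simpl.
  set (m := Cmod u) in *.
  assert (Hln : Rabs (ln m) <= 2 / 10000).
  { assert (ln m <= m - 1) by (pose proof (exp_ineq1_le (ln m)); rewrite exp_ln in H; lra).
    assert (- ln m <= / m - 1).
    { rewrite <- ln_Rinv by lra. pose proof (exp_ineq1_le (ln (/ m))).
      rewrite exp_ln in H0 by (apply Rinv_0_lt_compat; lra). lra. }
    assert (/ m - 1 <= 2/10000).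
    { apply (Rmult_le_reg_r m); [lra|]. rewrite Rmult_minus_distr_r, Rinv_l by lra. lra. }
    apply Rabs_le. split; lra. }
  assert (Hre : Rabs (Re (u - 1)%C) <= Cmod (u - 1)) by apply re_le_Cmod.
  assert (Er : Re (u - 1)%C = Re u - 1) by (unfold Cminus; rewrite re_plus, re_opp; simpl; ring).
  rewrite Er in Hre.
  apply Rabs_le_between in Hre.
  set (t := Re u / m).
  assert (Ht1 : t <= 1).
  { unfold t. pose proof (re_le_Cmod u). apply Rabs_le_between in H. fold m in H.
    apply (Rmult_le_reg_r m); [lra|]. replace (Re u / m * m) with (Re u) by (field; lra). lra. }
  assert (Ht0 : 9997 / 10000 <= t).
  { unfold t. apply (Rmult_le_reg_r m); [lra|]. replace (Re u / m * m) with (Re u) by (field; lra). nra. }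
  assert (Hcos : cos (1/32) < 9997 / 10000).
  { pose proof PI2_3_2. pose proof (cos_bound (1/32) 0 ltac:(lra) ltac:(lra)) as [_ H2].
    unfold cos_approx in H2. change (2*(0+1))%nat with 2%nat in H2. cbn [sum_f_R0] in H2.
    unfold cos_term in H2.
    replace (INR (Factorial.fact (2*0))) with 1 in H2 by (simpl; ring).
    replace (INR (Factorial.fact (2*1))) with 2 in H2 by (simpl; ring).
    replace (INR (Factorial.fact (2*2))) with 24 in H2 by (simpl; ring).
    simpl in H2. lra. }
  assert (Hac : acos t <= 1/32).
  { destruct (Rle_dec (acos t) (1/32)) as [?|Hn]; auto. exfalso.
    pose proof (acos_bound t). pose proof PI2_3_2.
    pose proof (cos_decreasing_1 (1/32) (acos t) ltac:(lra) ltac:(lra) ltac:(lra) ltac:(lra) ltac:(lra)).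
    rewrite cos_acos in H1 by lra. lra. }
  pose proof (acos_bound t).
  assert (Rabs (if Rle_dec 0 (Im u) then acos t else - acos t) <= 1/32).
  { destruct (Rle_dec 0 (Im u)); [rewrite Rabs_pos_eq by lra | rewrite Rabs_Ropp, Rabs_pos_eq by lra]; lra. }
  lra.
Qed.

Lemma Lg_exd (u : C) : Cmod (u - 1) < rr -> exd Lg u.
Proof.
  intro Hu. pose proof (Cmod_near1 u Hu) as Hm.
  assert (Hunz : u <> 0%C) by (apply Cmod_gt_0; unfold rr in *; lra).
  apply (exd_sq Lg u (/ u)%C 64 (rr - Cmod (u - 1))); [lra|lra|].
  intros h Hh.
  set (u' := (u + h)%C).
  assert (Hu' : Cmod (u' - 1) < rr).
  { unfold u'. replace (u + h - 1)%C with ((u - 1) + h)%C by ring.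
    pose proof (Cmod_triangle (u - 1) h). lra. }
  pose proof (Cmod_near1 u' Hu') as Hm'.
  assert (Hu'nz : u' <> 0%C) by (apply Cmod_gt_0; unfold rr in *; lra).
  set (a := (Lg u' - Lg u)%C).
  assert (Ha : Cmod a <= 1/8).
  { unfold a. unfold Cminus. eapply Rle_trans; [apply Cmod_triangle|]. rewrite Cmod_opp.
    pose proof (Lg_small u Hu). pose proof (Lg_small u' Hu'). lra. }
  assert (Hea : (cexp a - 1)%C = (h / u)%C).
  { unfold a. rewrite cexp_minus, !Lg_spec by auto. unfold u'. field. auto. }
  pose proof (cexp_taylor a ltac:(lra)) as Ht.
  assert (Hhu : Cmod (h / u) <= 2 * Cmod h).
  { unfold Cdiv. rewrite Cmod_mult, Cmod_inv by auto.
    assert (/ Cmod u <= 2).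
    { replace 2 with (/ (1/2)) by field. apply Rinv_le_contravar; unfold rr in *; lra. }
    pose proof (Cmod_ge_0 h). pose proof (Cmod_ge_0 u). nra. }
  assert (Haa : Cmod a <= 4 * Cmod h).
  { assert (Cmod a <= Cmod (cexp a - 1) + Cmod (cexp a - 1 - a)).
    { replace a with ((cexp a - 1) - (cexp a - 1 - a))%C at 1 by ring.
      unfold Cminus at 1. eapply Rle_trans; [apply Cmod_triangle|]. rewrite Cmod_opp. lra. }
    assert (Cmod (cexp a - 1) = Cmod (h / u)) by (rewrite Hea; auto).
    pose proof (Cmod_ge_0 a).
    assert (4 * (Cmod a * Cmod a) <= Cmod a / 2) by nra. lra. }
  replace (a - h * / u)%C with (- (cexp a - 1 - a))%C.
  - rewrite Cmod_opp. pose proof (Cmod_ge_0 a). pose proof (Cmod_ge_0 h). nra.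
  - replace (h * / u)%C with (h / u)%C by reflexivity. rewrite <- Hea. unfold a. ring.
Qed.

Lemma loclog (w0 : C) : w0 <> 0%C -> exists r, 0 < r /\ exists L : C -> C,
  forall w, Cmod (w - w0) < r -> cexp (L w) = w /\ exd L w.
Proof.
  intro Hw0. pose proof (proj1 (Cmod_gt_0 w0) Hw0) as Hm0.
  exists (rr * Cmod w0). split. unfold rr; nra.
  exists (fun w => (Lg w0 + Lg (w * / w0))%C).
  intros w Hw.
  assert (Hq : Cmod (w * / w0 - 1) < rr).
  { replace (w * / w0 - 1)%C with ((w - w0) * / w0)%C by (field; auto).
    rewrite Cmod_mult, Cmod_inv by auto.
    apply (Rmult_lt_reg_r (Cmod w0)); auto. rewrite Rmult_assoc, Rinv_l by lra. lra. }
  pose proof (Cmod_near1 _ Hq).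
  assert (Hnz : (w * / w0)%C <> 0%C) by (apply Cmod_gt_0; unfold rr in *; lra).
  split.
  - rewrite cexp_add, !Lg_spec by auto. field. auto.
  - unfold exd.
    apply (@ex_filterdiff_plus_fct C_AbsRing C_NormedModule C_NormedModule _ _
             (fun _ => Lg w0) (fun w => Lg (w * / w0)%C)).
    + apply ex_filterdiff_const.
    + apply (ex_filterdiff_comp' (fun w => (w * / w0)%C) Lg w).
      * exists (fun y => (y * / w0)%C). apply filterdiff_linear. apply lin_mul.
      * apply Lg_exd; auto.
Qed.

Lemma convA (U : NormedModule C_AbsRing) (f : U -> C) F :
  @ex_filterdiff C_AbsRing U C_NormedModule f F -> @ex_filterdiff C_AbsRing U (AbsRing_NormedModule C_AbsRing) f F.
Proof. intros [l [[Hp Hs Hn] Hd]]. exists l. split. split. exact Hp. exact Hs. exact Hn. exact Hd. Qed.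
Lemma convB (U : NormedModule C_AbsRing) (f : U -> C) F :
  @ex_filterdiff C_AbsRing U (AbsRing_NormedModule C_AbsRing) f F -> @ex_filterdiff C_AbsRing U C_NormedModule f F.
Proof. intros [l [[Hp Hs Hn] Hd]]. exists l. split. split. exact Hp. exact Hs. exact Hn. exact Hd. Qed.

Lemma holo_id (O : C2 -> Prop) : holo_on O (fun y => y).
Proof. intros x _. exists (fun y => y). apply filterdiff_id. Qed.

Lemma holo_chart (L P : C -> C) (O : C -> Prop) :
  (forall u, O u -> exd L u) -> (forall v, exd P v) ->
  holo_on (fun y => O (snd y)) (fun y => ((fst y * cexp (P (L (snd y))))%C, cexp (- L (snd y)))).
Proof.
  intros HL HP x Hx.
  assert (Hsnd : @ex_filterdiff C_AbsRing C2_NM C_NormedModule (fun y => snd y) (locally x)).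
  { exists (fun y : C2_NM => snd y). apply filterdiff_linear. apply is_linear_snd. }
  assert (Hfst : @ex_filterdiff C_AbsRing C2_NM C_NormedModule (fun y => fst y) (locally x)).
  { exists (fun y : C2_NM => fst y). apply filterdiff_linear. apply is_linear_fst. }
  assert (HLs : @ex_filterdiff C_AbsRing C2_NM C_NormedModule (fun y => L (snd y)) (locally x)).
  { apply (ex_filterdiff_comp' (fun y : C2_NM => snd y) L x Hsnd (HL _ Hx)). }
  assert (HPL : @ex_filterdiff C_AbsRing C2_NM C_NormedModule (fun y => P (L (snd y))) (locally x)).
  { apply (ex_filterdiff_comp' (fun y : C2_NM => L (snd y)) P x HLs (HP _)). }
  assert (HE1 : @ex_filterdiff C_AbsRing C2_NM C_NormedModule (fun y => cexp (P (L (snd y)))) (locally x)).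
  { apply (ex_filterdiff_comp' (fun y : C2_NM => P (L (snd y))) cexp x HPL (exd_cexp _)). }
  assert (Hc1 : @ex_filterdiff C_AbsRing C2_NM C_NormedModule
                  (fun y => (fst y * cexp (P (L (snd y))))%C) (locally x)).
  { apply convB. exact (@ex_filterdiff_mult_fct C_AbsRing C2_NM (fun y => fst y) (fun y => cexp (P (L (snd y)))) x
             Cmult_comm (convA _ _ _ Hfst) (convA _ _ _ HE1)). }
  assert (Hopp : @ex_filterdiff C_AbsRing C2_NM C_NormedModule (fun y => (- L (snd y))%C) (locally x)).
  { exact (@ex_filterdiff_opp_fct C_AbsRing C2_NM C_NormedModule (locally x) _ (fun y => L (snd y)) HLs). }
  assert (Hc2 : @ex_filterdiff C_AbsRing C2_NM C_NormedModule (fun y => cexp (- L (snd y))) (locally x)).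
  { apply (ex_filterdiff_comp' (fun y : C2_NM => (- L (snd y))%C) cexp x Hopp (exd_cexp _)). }
  assert (Hpair : forall z : C2_NM, @ex_filterdiff C_AbsRing C2_NM C2_NM
                    (fun t : C2_NM => (fst t, snd t)) (locally z)).
  { intro z. apply (@ex_filterdiff_ext C_AbsRing C2_NM C2_NM (locally z) _ (fun t => t)).
    intro t. destruct t; reflexivity. apply ex_filterdiff_id. }
  destruct (@ex_filterdiff_comp'_2 C_AbsRing C2_NM C_NormedModule C_NormedModule C2_NM
              _ _ (fun a b => (a, b)) x Hc1 Hc2 (Hpair _)) as [l Hl].
  exists l. exact Hl.
Qed.

Lemma sqrt_sum_le (u v : R) : 0 <= u -> 0 <= v -> sqrt (u ^ 2 + v ^ 2) <= u + v.
Proof.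
  intros Hu Hv. rewrite <- (sqrt_Rsqr (u + v)) by lra. apply sqrt_le_1_alt. unfold Rsqr. nra.
Qed.

Lemma holo_cont1 (O : C2 -> Prop) g x : holo_on O g -> O x -> forall eps, 0 < eps ->
  exists e, 0 < e /\ forall y, ball2 x e y -> Cmod (fst (g y) - fst (g x)) < eps.
Proof.
  intros Hg Hx eps Heps.
  destruct (Hg x Hx) as [l Hl].
  assert (Hc : continuous g x) by (apply (@filterdiff_continuous C_AbsRing C2_NM C2_NM g x); exists l; exact Hl).
  assert (HP : locally (g x) (fun z : C2_NM => norm (minus z (g x)) < eps)).
  { apply (@locally_le_locally_norm C_AbsRing C2_NM). exists (mkposreal _ Heps). intros z Hz. exact Hz. }
  specialize (Hc _ HP). simpl in Hc.
  apply (@locally_norm_le_locally C_AbsRing C2_NM) in Hc.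
  destruct Hc as [d Hd].
  exists (d / 2). split. pose proof (cond_pos d). lra.
  intros y [Hy1 Hy2].
  assert (Hn : norm (minus y x) < d).
  { change (norm (minus y x)) with (sqrt (norm (fst (minus y x)) ^ 2 + norm (snd (minus y x)) ^ 2)).
    change (norm (fst (minus y x))) with (Cmod (fst y - fst x)).
    change (norm (snd (minus y x))) with (Cmod (snd y - snd x)).
    eapply Rle_lt_trans; [apply sqrt_sum_le; apply Cmod_ge_0|]. lra. }
  specialize (Hd y Hn).
  eapply Rle_lt_trans; [|apply Hd].
  change (Cmod (fst (g y) - fst (g x))) with (norm (fst (minus (g y) (g x)))).
  apply norm_le_prod_norm_1.
Qed.
Lemma holo_sub (O1 O2 : C2 -> Prop) g : holo_on O1 g -> (forall y, O2 y -> O1 y) -> holo_on O2 g.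
Proof. intros H HO x Hx. apply H, HO, Hx. Qed.

Lemma near_annulus a b (x y : C) e : annulus a b x -> e <= Cmod x - a -> e <= b - Cmod x ->
  Cmod (y - x) < e -> annulus a b y.
Proof. intros [H1 H2] He1 He2 Hy. pose proof (Cmod_diff y x). apply Rabs_le_between in H. split; lra. Qed.

Lemma near_disk a (x y : C) e : disk a x -> e <= a - Cmod x -> Cmod (y - x) < e -> disk a y.
Proof. intros H1 He Hy. pose proof (Cmod_diff y x). apply Rabs_le_between in H. unfold disk in *. lra. Qed.

Theorem main_thm (r0 r1 r2 s : R) : Hyp r0 r1 r2 s ->
  biholomorphic (Y_gluing r0 r1 r2 s) (E0_gluing r0 r1 r2).
Proof.
  intro Hh. pose proof (Hyp_facts _ _ _ _ Hh) as (F1 & F2 & F3 & F4 & F5 & F6 & F7).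
  pose proof Hh as (H0 & H1 & H2 & H3 & H4 & H5 & H6 & H7 & H8).
  assert (Hr0i : 0 < / r0) by (apply Rinv_0_lt_compat; auto).
  assert (Hr1i : 0 < / r1) by (apply Rinv_0_lt_compat; auto).
  exists (Fmap r0 r2), (Hmap r0 r1 r2 s).
  split; [|split; [|split; [|split; [|split; [|split; [|split]]]]]].
  - intros p Dp. apply (F_dom r0 r1 r2 s); auto.
  - intros q Dq. apply H_spec; auto.
  - intros p p' _ _ Hpp. apply (F_resp r0 r1 r2 s); auto.
  - intros q q' Dq Dq' Hqq'.
    destruct (H_spec r0 r1 r2 s q Hh Dq) as [Dh Eh].
    destruct (H_spec r0 r1 r2 s q' Hh Dq') as [Dh' Eh'].
    apply (F_inj r0 r1 r2 s); auto.
    eapply geqv_trans; [apply Eh|]. eapply geqv_trans; [apply Hqq'|]. apply geqv_sym; auto.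
  - intros p Dp.
    pose proof (F_dom r0 r1 r2 s p Hh Dp) as DF.
    destruct (H_spec r0 r1 r2 s _ Hh DF) as [Dh Eh].
    apply (F_inj r0 r1 r2 s); auto.
  - intros q Dq. apply H_spec; auto.
  -
    intros p [Ep Dp]. destruct p as [t z]; simpl in *; subst t.
    destruct (excluded_middle_informative (V r0 r2 z)) as [Hv|Hv].
    + pose proof Hv as [[Ha1 Ha2] Hd]. unfold disk in Hd.
      set (e := Rmin (Rmin (Cmod (fst z) - 1) (r2 - Cmod (fst z))) (/ r0 - Cmod (snd z))).
      assert (He1 : e <= Cmod (fst z) - 1) by (unfold e; eapply Rle_trans; [apply Rmin_l|apply Rmin_l]).
      assert (He2 : e <= r2 - Cmod (fst z)) by (unfold e; eapply Rle_trans; [apply Rmin_l|apply Rmin_r]).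
      assert (He3 : e <= / r0 - Cmod (snd z)) by (unfold e; apply Rmin_r).
      exists e, 0%nat, (fun y => y). split; [|split].
      * unfold e. apply Rmin_glb_lt; [apply Rmin_glb_lt|]; lra.
      * apply holo_id.
      * intros y [Hy1 Hy2] Dy.
        assert (Vy : V r0 r2 y).
        { split. apply (near_annulus 1 r2 (fst z) (fst y) e (conj Ha1 Ha2) He1 He2 Hy1).
          apply (near_disk (/r0) (snd z) (snd y) e Hd He3 Hy2). }
        split. left; split; auto. unfold Fmap; simpl.
        destruct (excluded_middle_informative (V r0 r2 y)); [apply geqv_refl|contradiction].
    + assert (Hz : V' r0 r1 s z) by (destruct Dp; [contradiction|auto]).
      pose proof Hz as [[Ha1 Ha2] [Hb1 Hb2]].
      assert (Hnz2 : snd z <> 0%C) by (apply Cmod_gt_0; lra).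
      destruct (loclog (snd z) Hnz2) as [r [Hr [L HL]]].
      set (e := Rmin (Rmin r (Rmin (Cmod (fst z) - 1) (s - Cmod (fst z))))
                     (Rmin (Cmod (snd z) - / r1) (/ r0 - Cmod (snd z)))).
      assert (He0 : e <= r) by (unfold e; eapply Rle_trans; [apply Rmin_l|apply Rmin_l]).
      assert (He1 : e <= Cmod (fst z) - 1) by (unfold e; eapply Rle_trans; [apply Rmin_l|];
        eapply Rle_trans; [apply Rmin_r|apply Rmin_l]).
      assert (He2 : e <= s - Cmod (fst z)) by (unfold e; eapply Rle_trans; [apply Rmin_l|];
        eapply Rle_trans; [apply Rmin_r|apply Rmin_r]).
      assert (He3 : e <= Cmod (snd z) - / r1) by (unfold e; eapply Rle_trans; [apply Rmin_r|apply Rmin_l]).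
      assert (He4 : e <= / r0 - Cmod (snd z)) by (unfold e; eapply Rle_trans; [apply Rmin_r|apply Rmin_r]).
      exists e, 1%nat, (fun y => ((fst y * cexp (Qf (- L (snd y))))%C, cexp (- L (snd y)))).
      split; [|split].
      * unfold e. repeat apply Rmin_glb_lt; lra.
      * eapply holo_sub.
        -- apply (holo_chart L (fun v => Qf (- v)) (fun u => Cmod (u - snd z) < r)).
           intros u Hu; apply HL; auto. apply exd_Qneg.
        -- intros y [_ Hy]. simpl. lra.
      * intros y [Hy1 Hy2] Dy.
        assert (Vy : V' r0 r1 s y).
        { split. apply (near_annulus 1 s (fst z) (fst y) e (conj Ha1 Ha2) He1 He2 Hy1).
          apply (near_annulus (/r1) (/r0) (snd z) (snd y) e (conj Hb1 Hb2) He3 He4 Hy2). }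
        destruct (HL (snd y) ltac:(lra)) as [HLy _].
        assert (Hnzy : snd y <> 0%C) by (apply (annulus_nz (/r1) (/r0)); [lra|apply Vy]).
        assert (Einv : cexp (- L (snd y)) = (/ snd y)%C) by (rewrite cexp_opp, HLy; auto).
        assert (HW : Wchart r0 r1 ((fst y * cexp (Qf (- L (snd y))))%C, cexp (- L (snd y)))).
        { split; simpl.
          - apply Cmult_neq_0; [|apply cexp_nz]. apply (annulus_nz 1 s); [lra|apply Vy].
          - rewrite Einv. pose proof (annulus_inv _ _ _ Hr1i (proj2 Vy)).
            rewrite !Rinv_inv in H; auto. }
        split. right; split; auto.
        apply (K_lemma r0 r1 r2 s); auto.
        split; simpl; auto. exists (- L (snd y))%C. split; reflexivity.
  -
    intros q Dq. destruct q as [t w].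
    destruct Dq as [[Eq Hq]|[Eq Hq]]; simpl in Eq, Hq; subst t; simpl.
    + pose proof Hq as [[Ha1 Ha2] Hd]. unfold disk in Hd.
      set (e := Rmin (Rmin (Cmod (fst w) - 1) (r2 - Cmod (fst w))) (/ r0 - Cmod (snd w))).
      assert (He1 : e <= Cmod (fst w) - 1) by (unfold e; eapply Rle_trans; [apply Rmin_l|apply Rmin_l]).
      assert (He2 : e <= r2 - Cmod (fst w)) by (unfold e; eapply Rle_trans; [apply Rmin_l|apply Rmin_r]).
      assert (He3 : e <= / r0 - Cmod (snd w)) by (unfold e; apply Rmin_r).
      exists e, 0%nat, (fun y => y). split; [|split].
      * unfold e. apply Rmin_glb_lt; [apply Rmin_glb_lt|]; lra.
      * apply holo_id.
      * intros y [Hy1 Hy2] Dy.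
        assert (Vy : V r0 r2 y).
        { split. apply (near_annulus 1 r2 (fst w) (fst y) e (conj Ha1 Ha2) He1 He2 Hy1).
          apply (near_disk (/r0) (snd w) (snd y) e Hd He3 Hy2). }
        assert (DY : gdom (Y_gluing r0 r1 r2 s) (0%nat, y)) by (split; auto).
        split; auto.
        destruct (H_spec r0 r1 r2 s (0%nat, y) Hh Dy) as [Dh Eh].
        apply (F_inj r0 r1 r2 s); auto.
        eapply geqv_trans; [apply Eh|]. unfold Fmap; simpl.
        destruct (excluded_middle_informative (V r0 r2 y)); [apply geqv_refl|contradiction].
    + destruct w as [w1 w2]. pose proof Hq as [Hw1 [Hb1 Hb2]]. simpl in *.
      assert (Hnz2 : w2 <> 0%C) by (apply Cmod_gt_0; lra).
      destruct (loclog w2 Hnz2) as [r [Hr [L HL]]].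
      assert (HLw : cexp (L w2) = w2).
      { apply HL. replace (w2 - w2)%C with (RtoC 0) by ring. rewrite Cmod_0; lra. }
      destruct (exists_k r0 r1 r2 s (w1, w2) (L w2) Hh Hq HLw) as [k Hk]. simpl in Hk.
      set (g := fun y : C2 => ((fst y * cexp (- Qf (L (snd y)) - IZR k * L (snd y)))%C,
                               cexp (- L (snd y)))).
      assert (Hg : holo_on (fun y => Cmod (snd y - w2) < r) g).
      { apply (holo_chart L (fun v => (- Qf v - IZR k * v)%C) (fun u => Cmod (u - w2) < r)).
        intros u Hu; apply HL; auto. apply exd_Qk. }
      set (m := Cmod (fst (g (w1, w2)))).
      assert (Hm : 1 < m < s) by exact Hk.
      destruct (holo_cont1 _ g (w1, w2) Hg ltac:(simpl; replace (w2 - w2)%C with (RtoC 0) by ring; rewrite Cmod_0; lra)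
                  (Rmin (m - 1) (s - m)) ltac:(apply Rmin_glb_lt; lra)) as [e1 [He1 Hc]].
      exists (Rmin r e1), 0%nat, g. split; [|split].
      * apply Rmin_glb_lt; lra.
      * eapply holo_sub; [apply Hg|]. intros y [_ Hy]. simpl in *.
        pose proof (Rmin_l r e1). lra.
      * intros y Hy Dy.
        assert (Hy' : ball2 (w1, w2) e1 y).
        { destruct Hy; split; eapply Rlt_le_trans; eauto; apply Rmin_r. }
        assert (Hy2 : Cmod (snd y - w2) < r).
        { destruct Hy as [_ Hy]. simpl in Hy. pose proof (Rmin_l r e1). lra. }
        destruct Dy as [[? _]|[_ Wy]]; [discriminate|]. simpl in Wy.
        destruct (HL (snd y) Hy2) as [HLy _].
        assert (Hnzy : snd y <> 0%C) by (apply (annulus_nz r0 r1); [lra|apply Wy]).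
        assert (Vg : V' r0 r1 s (g y)).
        { split.
          - specialize (Hc y Hy'). fold m in Hc. unfold annulus.
            pose proof (Cmod_diff (fst (g y)) (fst (g (w1, w2)))). fold m in H.
            apply Rabs_le_between in H.
            pose proof (Rmin_l (m - 1) (s - m)). pose proof (Rmin_r (m - 1) (s - m)). lra.
          - unfold g; simpl. rewrite cexp_opp, HLy. apply annulus_inv; auto. apply Wy. }
        assert (DY : gdom (Y_gluing r0 r1 r2 s) (0%nat, g y)) by (split; auto).
        split; auto.
        assert (DE : gdom (E0_gluing r0 r1 r2) (1%nat, y)) by (right; split; auto).
        destruct (H_spec r0 r1 r2 s (1%nat, y) Hh DE) as [Dh Eh].
        apply (F_inj r0 r1 r2 s); auto.
        eapply geqv_trans; [apply Eh|]. apply geqv_sym.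
        apply (K_lemma r0 r1 r2 s); auto.
        assert (Eg : g y = ((fst y * cexp (- Qf (L (snd y)) - IZR k * L (snd y)))%C, (/ snd y)%C)).
        { unfold g. rewrite cexp_opp, HLy. reflexivity. }
        rewrite Eg. destruct y as [y1 y2]. simpl in *. apply Phi_rel_k; auto.
Qed.

Theorem proposition2p1 (r0 r1 r2 s : R) :
  0 < r0 -> 0 < r1 -> 0 < r2 ->
  1 < r2 -> r2 < / r1 ->
  r1 / r2 < r0 -> r0 < r1 ->
  / r0 < s -> s < r2 / r1 ->
  biholomorphic (Y_gluing r0 r1 r2 s) (E0_gluing r0 r1 r2).
Proof.
  intros. apply main_thm. repeat split; auto.
Qed.
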